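(* Consider Picard's case of the sixth Painlevé equation, $\ddot q=\frac12\left(\frac1q+\frac1{q-1}+\frac1{q-t}\right)\dot q^2-\left(\frac1t+\frac1{t-1}+\frac1{q-t}\right)\dot q+\frac{q(q-1)(q-t)}{t^2(t-1)^2}\cdot\frac12\cdot\frac{t(t-1)}{(q-t)^2}$ (i.e. $\alpha=\beta=\gamma=0$, $\delta=\frac12$). Parametrize the independent variable by $s\in\mathbb C$ via $t=\frac{s^3(s+2)}{2s+1}$. Then the transformation $(q,t)\mapsto(\tilde q,\tilde t)$, $$\tilde t=\frac{s(s+2)^3}{(2s+1)^3},\qquad \tilde q=\frac{q\,(q+s(s+2))^2}{((2s+1)q+s^2)^2},$$ preserves this equation: if $q(t)$ is a solution, then $\tilde q$, regarded as a function of $\tilde t$, is again a solution of the same equation. *)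

(* Defs.v *)
From Stdlib Require Import Reals.
From Coquelicot Require Import Coquelicot.

Open Scope C_scope.

Definition cderiv (f : C -> C) (z l : C) : Prop :=
  @is_derive C_AbsRing C_NormedModule f z l.

Definition PVI_rhs (t q dq : C) : C :=
  RtoC (1/2) * (/ q + / (q - 1) + / (q - t)) * dq ^ 2
  - (/ t + / (t - 1) + / (q - t)) * dq
  + q * (q - 1) * (q - t) / (t ^ 2 * (t - 1) ^ 2)
    * (RtoC 0 + RtoC 0 * t / q ^ 2 + RtoC 0 * (t - 1) / (q - 1) ^ 2
       + RtoC (1/2) * (t * (t - 1)) / (q - t) ^ 2).

Definition PVI_sol_at (q dq ddq : C -> C) (t : C) : Prop :=
  t <> 0 /\ t <> 1 /\ q t <> 0 /\ q t <> 1 /\ q t <> t /\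
  locally t (fun x => cderiv q x (dq x)) /\
  cderiv dq t (ddq t) /\
  ddq t = PVI_rhs t (q t) (dq t).

Definition t_of (s : C) : C := s ^ 3 * (s + RtoC 2) / (RtoC 2 * s + 1).

Definition tt_of (s : C) : C :=
  s * (s + RtoC 2) ^ 3 / (RtoC 2 * s + 1) ^ 3.

Definition qt_of (q s : C) : C :=
  q * (q + s * (s + RtoC 2)) ^ 2 / ((RtoC 2 * s + 1) * q + s ^ 2) ^ 2.

(* Main.v *)
Require Import Defs.
From Stdlib Require Import Reals Lra Psatz.
From Coquelicot Require Import Coquelicot.
Open Scope C_scope.

Lemma real_bound (r cy m eps : R) : 0 < m -> 0 < eps -> 0 <= r -> r < m / 2 ->
  r < eps * (m * m * m) / 2 -> m - r <= cy ->
  r * r / (cy * (m * m)) <= eps * r.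
Proof.
  intros Hm He Hr H1 H2 H3.
  assert (Hcy : m / 2 < cy) by lra.
  assert (Hp : 0 < cy * (m * m)) by (apply Rmult_lt_0_compat; nra).
  unfold Rdiv. apply (Rmult_le_reg_r (cy * (m * m))); auto.
  rewrite Rmult_assoc, Rinv_l by lra. rewrite Rmult_1_r.
  assert (eps * r * (cy * (m*m)) >= eps * r * (m/2 * (m*m))).
  { apply Rle_ge, Rmult_le_compat_l. nra. apply Rmult_le_compat_r; nra. }
  nra.
Qed.

Lemma cd_Cinv (z : C) : z <> 0 ->
  @is_derive C_AbsRing C_NormedModule (fun y => / y) z (- / z ^ 2).
Proof.
  intros Hz. split.
  - apply is_linear_scal_l.
  - intros x Hx. apply (@is_filter_lim_locally_unique C_AbsRing (AbsRing_NormedModule C_AbsRing)) in Hx. subst x.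
    intros eps.
    assert (Hm : 0 < Cmod z) by (apply Cmod_gt_0; auto).
    assert (Hd : 0 < Rmin (Cmod z / 2) (eps * (Cmod z * Cmod z * Cmod z) / 2)).
    { apply Rmin_pos. lra. destruct eps as [e He]; simpl. 
      assert (0 < e * (Cmod z * Cmod z * Cmod z)) by
        (apply Rmult_lt_0_compat; auto; repeat apply Rmult_lt_0_compat; auto).
      lra. }
    exists (mkposreal _ Hd). intros y Hy. change C in y.
    change (Cmod (y - z) < Rmin (Cmod z / 2) (eps * (Cmod z * Cmod z * Cmod z) / 2)) in Hy.
    change (Cmod (/ y - / z - (y - z) * (- / z ^ 2)) <= eps * Cmod (y - z)).
    assert (Hr1 : Cmod (y - z) < Cmod z / 2) by (eapply Rlt_le_trans; [exact Hy| apply Rmin_l]).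
    assert (Hr2 : Cmod (y - z) < eps * (Cmod z * Cmod z * Cmod z) / 2) by (eapply Rlt_le_trans; [exact Hy| apply Rmin_r]).
    assert (Hcy : Cmod z - Cmod (y - z) <= Cmod y).
    { assert (Cmod z <= Cmod y + Cmod (z - y)).
      { replace z with (y + (z - y)) at 1 by ring. apply Cmod_triangle. }
      replace (z - y) with (- (y - z)) in H by ring. rewrite Cmod_opp in H. lra. }
    assert (Hy0 : y <> 0).
    { intro E. subst y. rewrite Cmod_0 in Hcy. pose proof (Cmod_ge_0 (0 - z)). lra. }
    replace (/ y - / z - (y - z) * (- / z ^ 2)) with ((y - z) * (y - z) * / (y * (z * z)))
      by (field; auto).
    rewrite Cmod_mult, Cmod_inv, !Cmod_mult.
    2:{ repeat apply Cmult_neq_0; auto. }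
    fold (Rdiv (Cmod (y - z) * Cmod (y - z)) (Cmod y * (Cmod z * Cmod z))).
    apply real_bound; auto. destruct eps; simpl; auto. apply Cmod_ge_0.
Qed.

Lemma br1 f x a : cderiv f x a -> @is_derive C_AbsRing (AbsRing_NormedModule C_AbsRing) f x a.
Proof. intros [H1 H2]. split. apply is_linear_scal_l.
intros y Hy eps. specialize (H2 y Hy eps). 
eapply filter_imp; [|exact H2]. intros z Hz. simpl in *.
change (Cmod (f z - f y - (z - y) * a) <= eps * Cmod (z - y))%C in Hz.
change (Cmod (f z - f y - (z - y) * a) <= eps * Cmod (z - y))%C. exact Hz. Qed.
Lemma br2 f x a : @is_derive C_AbsRing (AbsRing_NormedModule C_AbsRing) f x a -> cderiv f x a.
Proof. intros [H1 H2]. split. apply is_linear_scal_l.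
intros y Hy eps. specialize (H2 y Hy eps). 
eapply filter_imp; [|exact H2]. intros z Hz. simpl in *.
change (Cmod (f z - f y - (z - y) * a) <= eps * Cmod (z - y))%C in Hz.
change (Cmod (f z - f y - (z - y) * a) <= eps * Cmod (z - y))%C. exact Hz. Qed.

Lemma cd_eq f x a b : cderiv f x a -> a = b -> cderiv f x b.
Proof. intros H ->; exact H. Qed.

Lemma cd_const (c x : C) : cderiv (fun _ => c) x 0.
Proof. eapply cd_eq; [exact (@is_derive_const C_AbsRing C_NormedModule c x)|]. reflexivity. Qed.

Lemma cd_id (x : C) : cderiv (fun y => y) x 1.
Proof. eapply cd_eq; [exact (br2 _ _ _ (@is_derive_id C_AbsRing x))|]. reflexivity. Qed.

Lemma cd_plus f g x a b : cderiv f x a -> cderiv g x b ->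
  cderiv (fun y => f y + g y) x (a + b).
Proof. intros Hf Hg. exact (@is_derive_plus C_AbsRing C_NormedModule f g x a b Hf Hg). Qed.

Lemma cd_minus f g x a b : cderiv f x a -> cderiv g x b ->
  cderiv (fun y => f y - g y) x (a - b).
Proof. intros Hf Hg. exact (@is_derive_minus C_AbsRing C_NormedModule f g x a b Hf Hg). Qed.

Lemma cd_mult f g x a b : cderiv f x a -> cderiv g x b ->
  cderiv (fun y => f y * g y) x (a * g x + f x * b).
Proof. intros Hf Hg. apply br2. exact (@is_derive_mult C_AbsRing f g x a b (br1 _ _ _ Hf) (br1 _ _ _ Hg) Cmult_comm). Qed.

Lemma cd_comp f g x a b : cderiv f (g x) a -> cderiv g x b ->
  cderiv (fun y => f (g y)) x (b * a).
Proof. intros Hf Hg. exact (@is_derive_comp C_AbsRing C_NormedModule f g x a b Hf (br1 _ _ _ Hg)). Qed.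

Lemma cd_inv f x a : cderiv f x a -> f x <> 0 ->
  cderiv (fun y => / f y) x (- a / f x ^ 2).
Proof.
  intros Hf H0. eapply cd_eq. eapply (cd_comp (fun y => / y) f x _ a). apply cd_Cinv; auto. exact Hf.
  field. auto.
Qed.

Lemma cd_div f g x a b : cderiv f x a -> cderiv g x b -> g x <> 0 ->
  cderiv (fun y => f y / g y) x ((a * g x - f x * b) / g x ^ 2).
Proof.
  intros Hf Hg H0. eapply cd_eq. apply (cd_mult f (fun y => / g y)); [exact Hf|]. apply cd_inv; [exact Hg| exact H0].
  field. auto.
Qed.

Lemma cd_pow2 f x a : cderiv f x a -> cderiv (fun y => f y ^ 2) x (RtoC 2 * f x * a).
Proof.
  intros Hf. eapply cd_eq. apply is_derive_ext with (f := fun y => f y * f y).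
  intros; simpl; ring. apply cd_mult; eauto. ring.
Qed.

Lemma cd_pow3 f x a : cderiv f x a -> cderiv (fun y => f y ^ 3) x (RtoC 3 * f x ^ 2 * a).
Proof.
  intros Hf. eapply cd_eq. apply is_derive_ext with (f := fun y => f y * (f y * f y)).
  intros; simpl; ring. apply cd_mult; eauto. apply cd_mult; eauto. simpl. ring.
Qed.

Lemma loc_CA (x : C) (P : C -> Prop) : @locally C_UniformSpace x P -> @locally (AbsRing_UniformSpace C_AbsRing) x P.
Proof.
  intros H. pose proof (@locally_norm_le_locally C_AbsRing C_NormedModule x P H) as H'.
  destruct H' as [e He]. exists e. intros y Hy. apply He.
  change (Cmod (y - x) < e) in Hy. unfold ball_norm. change (Cmod (y - x) < e). exact Hy. Qed.
Lemma loc_AC (x : C) (P : C -> Prop) : @locally (AbsRing_UniformSpace C_AbsRing) x P -> @locally C_UniformSpace x P.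
Proof.
  intros [e He]. apply (@locally_le_locally_norm C_AbsRing C_NormedModule x P).
  exists e. intros y Hy. apply He. unfold ball_norm in Hy. change (Cmod (y - x) < e) in Hy. change (Cmod (y - x) < e). exact Hy.
Qed.

Lemma cd_pow4 f x a : cderiv f x a -> cderiv (fun y => f y ^ 4) x (RtoC 4 * f x ^ 3 * a).
Proof.
  intros Hf. eapply cd_eq. apply is_derive_ext with (f := fun y => f y * (f y * (f y * f y))).
  intros; simpl; ring. apply cd_mult; eauto. apply cd_mult; eauto. apply cd_mult; eauto. simpl. ring.
Qed.

Lemma cpow_nz (z : C) (n : nat) : z <> 0 -> z ^ n <> 0.
Proof.
  intros H. induction n; simpl.
  - intro E. apply (f_equal fst) in E. simpl in E. lra.
  - apply Cmult_neq_0; auto.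
Qed.

Lemma cd_unique f g x a b : @locally C_UniformSpace x (fun y => f y = g y) -> cderiv f x a -> cderiv g x b -> a = b.
Proof.
  intros Hl Hf Hg.
  apply (is_derive_ext_loc _ _ _ _ (loc_CA _ _ Hl)) in Hf.
  apply is_C_derive_unique in Hf. apply is_C_derive_unique in Hg. congruence.
Qed.

Definition T1f (s : C) : C := RtoC 6 * s ^ 2 * (s + 1) ^ 2 / (RtoC 2 * s + 1) ^ 2.
Definition T2f (s : C) : C := RtoC 12 * s * (s + 1) * (RtoC 2 * s ^ 2 + RtoC 2 * s + 1) / (RtoC 2 * s + 1) ^ 3.
Definition TT1f (s : C) : C := RtoC 2 * (s - 1) ^ 2 * (s + RtoC 2) ^ 2 / (RtoC 2 * s + 1) ^ 4.
Definition TT2f (s : C) : C := RtoC 36 * (s - 1) * (s + RtoC 2) / (RtoC 2 * s + 1) ^ 5.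
Definition Df (s u : C) : C := (RtoC 2 * s + 1) * u + s ^ 2.
Definition D1f (s u u1 : C) : C := RtoC 2 * u + (RtoC 2 * s + 1) * u1 + RtoC 2 * s.
Definition D2f (s u1 u2 : C) : C := RtoC 4 * u1 + (RtoC 2 * s + 1) * u2 + RtoC 2.
Definition Nf (s u : C) : C := u * (u + s * (s + RtoC 2)) ^ 2.
Definition N1f (s u u1 : C) : C :=
  u1 * (u + s * (s + RtoC 2)) ^ 2 + RtoC 2 * u * (u + s * (s + RtoC 2)) * (u1 + (RtoC 2 * s + RtoC 2)).
Definition N2f (s u u1 u2 : C) : C :=
  u2 * (u + s * (s + RtoC 2)) ^ 2 + RtoC 4 * u1 * (u + s * (s + RtoC 2)) * (u1 + (RtoC 2 * s + RtoC 2))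
  + RtoC 2 * u * (u1 + (RtoC 2 * s + RtoC 2)) ^ 2 + RtoC 2 * u * (u + s * (s + RtoC 2)) * (u2 + RtoC 2).

Ltac cd_auto := repeat (match goal with
 | |- cderiv (fun _ => ?c) _ _ => apply cd_const
 | |- cderiv (fun y => y) _ _ => apply cd_id
 | |- cderiv (fun y => @?f y + @?g y) _ _ => apply (cd_plus f g)
 | |- cderiv (fun y => @?f y - @?g y) _ _ => apply (cd_minus f g)
 | |- cderiv (fun y => @?f y * @?g y) _ _ => apply (cd_mult f g)
 | |- cderiv (fun y => @?f y / @?g y) _ _ => apply (cd_div f g)
 | |- cderiv (fun y => @?f y ^ 2) _ _ => apply (cd_pow2 f)
 | |- cderiv (fun y => @?f y ^ 3) _ _ => apply (cd_pow3 f)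
 | |- cderiv (fun y => @?f y ^ 4) _ _ => apply (cd_pow4 f)
 end).

Lemma d_t s : RtoC 2 * s + 1 <> 0 -> cderiv t_of s (T1f s).
Proof.
  intros H. unfold t_of. eapply cd_eq. cd_auto. exact H.
  unfold T1f. cbv beta. field. auto.
Qed.

Lemma d_tt s : RtoC 2 * s + 1 <> 0 -> cderiv tt_of s (TT1f s).
Proof.
  intros H. unfold tt_of. eapply cd_eq. cd_auto. apply cpow_nz; exact H.
  unfold TT1f. cbv beta. field. auto.
Qed.

Lemma d_T1 s : RtoC 2 * s + 1 <> 0 -> cderiv T1f s (T2f s).
Proof.
  intros H. unfold T1f. eapply cd_eq. cd_auto. apply cpow_nz; exact H.
  unfold T2f. cbv beta. field. auto.
Qed.

Lemma d_TT1 s : RtoC 2 * s + 1 <> 0 -> cderiv TT1f s (TT2f s).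
Proof.
  intros H. unfold TT1f. eapply cd_eq. cd_auto. apply cpow_nz; exact H.
  unfold TT2f. cbv beta. field. auto.
Qed.

Lemma lin_solve (B k c n : C) : B * k + c = n -> k <> 0 -> B = (n - c) / k.
Proof. intros H Hk. rewrite <- H. field. auto. Qed.

Lemma cinv_nz (z : C) : z <> 0 -> / z <> 0.
Proof.
  intros H E. assert (E2 := Cinv_r z H). rewrite E, Cmult_0_r in E2.
  apply (f_equal fst) in E2. simpl in E2. lra.
Qed.

Lemma cdiv_nz (a b : C) : a <> 0 -> b <> 0 -> a / b <> 0.
Proof. intros. unfold Cdiv. apply Cmult_neq_0; auto. apply cinv_nz; auto. Qed.

Lemma rc_nz (r : R) : r <> 0%R -> RtoC r <> 0.
Proof. intros H E. apply (f_equal fst) in E. simpl in E. auto. Qed.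

Lemma key1 (s u p ddq A B Cc : C) :
  s <> 0 -> s + RtoC 2 <> 0 -> s - 1 <> 0 -> RtoC 2 * s + 1 <> 0 ->
  u <> 0 -> u - 1 <> 0 -> u - t_of s <> 0 -> t_of s <> 0 -> t_of s - 1 <> 0 ->
  Df s u <> 0 ->
  ddq = PVI_rhs (t_of s) u p ->
  A * Df s u ^ 2 = Nf s u ->
  B * TT1f s * Df s u ^ 2 + RtoC 2 * A * Df s u * D1f s u (p * T1f s) = N1f s u (p * T1f s) ->
  (Cc * TT1f s * TT1f s + B * TT2f s) * Df s u ^ 2
    + RtoC 4 * (B * TT1f s) * Df s u * D1f s u (p * T1f s)
    + RtoC 2 * A * (D1f s u (p * T1f s) ^ 2 + Df s u * D2f s (p * T1f s) (ddq * T1f s * T1f s + p * T2f s))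
    = N2f s u (p * T1f s) (ddq * T1f s * T1f s + p * T2f s) ->
  A <> 0 -> A - 1 <> 0 -> A - tt_of s <> 0 -> tt_of s <> 0 -> tt_of s - 1 <> 0 ->
  Cc = PVI_rhs (tt_of s) A B.
Proof.
  intros Hs Hs2 Hs1 H21 Hu Hu1 Hut Ht Ht1 HD Hddq HA HB HC HA0 HA1 HAt Htt Htt1.
  assert (HTT : TT1f s <> 0).
  { unfold TT1f. apply cdiv_nz; [|apply cpow_nz; auto].
    apply Cmult_neq_0; [apply Cmult_neq_0|]; try apply cpow_nz; auto. apply rc_nz; lra. }
  assert (HD2 : Df s u ^ 2 <> 0) by (apply cpow_nz; auto).
  assert (eA : A = Nf s u / Df s u ^ 2) by (rewrite <- HA; field; auto).
  assert (eB : B = (N1f s u (p * T1f s) - RtoC 2 * A * Df s u * D1f s u (p * T1f s)) / (TT1f s * Df s u ^ 2)).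
  { apply lin_solve. rewrite <- HB. ring. apply Cmult_neq_0; auto. }
  assert (eC : Cc = (N2f s u (p * T1f s) (ddq * T1f s * T1f s + p * T2f s)
     - (B * TT2f s * Df s u ^ 2 + RtoC 4 * (B * TT1f s) * Df s u * D1f s u (p * T1f s)
    + RtoC 2 * A * (D1f s u (p * T1f s) ^ 2 + Df s u * D2f s (p * T1f s) (ddq * T1f s * T1f s + p * T2f s))))
     / (TT1f s * TT1f s * Df s u ^ 2)).
  { apply lin_solve. rewrite <- HC. ring. apply Cmult_neq_0; [apply Cmult_neq_0|]; auto. }
  subst Cc. subst B. subst A. subst ddq.
  clear HA HB HC HTT HD2.
  unfold PVI_rhs, t_of, tt_of, Nf, N1f, N2f, Df, D1f, D2f, T1f, T2f, TT1f, TT2f in *.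
  assert (Hh : RtoC (1/2) = / RtoC 2) by (rewrite <- RtoC_inv by lra; f_equal; lra).
  rewrite Hh.
  field.
  cbv beta.
  repeat split; auto.
  all: try (apply cpow_nz; auto).
  all: try (intro E; apply HAt;
    replace (u * (u + s * (s + 2)) ^ 2 / ((2 * s + 1) * u + s ^ 2) ^ 2 -
    s * (s + 2) ^ 3 / (2 * s + 1) ^ 3) with
     ((u * (u + s * (s + 2)) ^ 2 * (2 * s + 1) ^ 3 -
       s * (s + 2) ^ 3 * ((2 * s + 1) * u + s ^ 2) ^ 2) / (((2 * s + 1) * u + s ^ 2) ^ 2 * (2 * s + 1) ^ 3)) by (field; auto);
    rewrite E; field; auto; fail).
  all: try (intro E; apply HA1;
    replace (u * (u + s * (s + 2)) ^ 2 / ((2 * s + 1) * u + s ^ 2) ^ 2 - 1) with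
     ((u * (u + s * (s + 2)) ^ 2 - ((2 * s + 1) * u + s ^ 2) ^ 2) / ((2 * s + 1) * u + s ^ 2) ^ 2) by (field; auto);
    rewrite E; field; auto; fail).
  all: try (intro E; apply HA0; rewrite E; field; auto; fail).
  all: try (intro E; apply Htt1;
    replace (s * (s + 2) ^ 3 / (2 * s + 1) ^ 3 - 1) with
     ((s * (s + 2) ^ 3 - (2 * s + 1) ^ 3) / (2 * s + 1) ^ 3) by (field; auto);
    rewrite E; field; auto; fail).
  all: try (intro E; apply Hut;
    replace (u - s ^ 3 * (s + 2) / (2 * s + 1)) with
     ((u * (2 * s + 1) - s ^ 3 * (s + 2)) / (2 * s + 1)) by (field; auto);
    rewrite E; field; auto; fail).
  all: try (intro E; apply Ht1;
    replace (s ^ 3 * (s + 2) / (2 * s + 1) - 1) with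
     ((s ^ 3 * (s + 2) - (2 * s + 1)) / (2 * s + 1)) by (field; auto);
    rewrite E; field; auto; fail).
Qed.

Lemma neq_sub (a b : C) : a <> b -> a - b <> 0.
Proof. intros H E. apply H. replace a with (a - b + b) by ring. rewrite E. ring. Qed.

Lemma s_facts (y : C) : RtoC 2 * y + 1 <> 0 -> tt_of y <> 0 -> tt_of y <> 1 ->
  y <> 0 /\ y + RtoC 2 <> 0 /\ y - 1 <> 0.
Proof.
  intros H21 H0 H1. split; [|split].
  - intro E. apply H0. unfold tt_of. rewrite E. unfold Cdiv. ring.
  - intro E. apply H0. unfold tt_of. rewrite E. unfold Cdiv. ring.
  - intro E. apply H1.
    assert (X : tt_of y - 1 = (y - 1) ^ 3 * (y + 1) / (RtoC 2 * y + 1) ^ 3)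
      by (unfold tt_of; field; auto).
    rewrite E in X. replace (tt_of y) with (tt_of y - 1 + 1) by ring. rewrite X.
    unfold Cdiv. ring.
Qed.

Ltac cd_auto2 := repeat (match goal with
 | |- cderiv (fun y => ?F (t_of y)) _ _ =>
     eapply (cd_comp F t_of); [eassumption| apply d_t; assumption]
 | |- cderiv (fun y => ?F (tt_of y)) _ _ =>
     eapply (cd_comp F tt_of); [eassumption| apply d_tt; assumption]
 | |- cderiv (fun y => T1f y) _ _ => apply d_T1; assumption
 | |- cderiv (fun y => TT1f y) _ _ => apply d_TT1; assumption
 | |- cderiv (fun _ => ?c) _ _ => apply cd_const
 | |- cderiv (fun y => y) _ _ => apply cd_id
 | |- cderiv (fun y => @?f y + @?g y) _ _ => apply (cd_plus f g)
 | |- cderiv (fun y => @?f y - @?g y) _ _ => apply (cd_minus f g)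
 | |- cderiv (fun y => @?f y * @?g y) _ _ => apply (cd_mult f g)
 | |- cderiv (fun y => @?f y ^ 2) _ _ => apply (cd_pow2 f)
 end).

Theorem theorem1p4 :
  forall (U : C -> Prop) (q dq ddq qt dqt ddqt : C -> C),
    open U ->
    (forall s, U s -> RtoC 2 * s + 1 <> 0 /\ PVI_sol_at q dq ddq (t_of s)) ->
    (forall s, U s ->
       (RtoC 2 * s + 1) * q (t_of s) + s ^ 2 <> 0 /\
       qt (tt_of s) = qt_of (q (t_of s)) s /\
       locally (tt_of s) (fun x => cderiv qt x (dqt x)) /\
       cderiv dqt (tt_of s) (ddqt (tt_of s))) ->
    (forall s, U s ->
       tt_of s <> 0 /\ tt_of s <> 1 /\
       qt (tt_of s) <> 0 /\ qt (tt_of s) <> 1 /\ qt (tt_of s) <> tt_of s) ->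
    forall s, U s -> PVI_sol_at qt dqt ddqt (tt_of s).
Proof.
  intros U q dq ddq qt dqt ddqt HU H1 H2 H3 s0 Hs0.
  assert (Dq : forall y, U y -> cderiv q (t_of y) (dq (t_of y))).
  { intros y Hy. destruct (H1 y Hy) as [_ [_ [_ [_ [_ [_ [Hl _]]]]]]].
    exact (locally_singleton _ _ Hl). }
  assert (Dqt : forall y, U y -> cderiv qt (tt_of y) (dqt (tt_of y))).
  { intros y Hy. destruct (H2 y Hy) as [_ [_ [Hl _]]].
    exact (locally_singleton _ _ Hl). }
  assert (E1 : forall y, U y ->
    dqt (tt_of y) * TT1f y * Df y (q (t_of y)) ^ 2
    + RtoC 2 * qt (tt_of y) * Df y (q (t_of y)) * D1f y (q (t_of y)) (dq (t_of y) * T1f y)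
    = N1f y (q (t_of y)) (dq (t_of y) * T1f y)).
  { intros y Hy.
    assert (H21 : RtoC 2 * y + 1 <> 0) by apply (H1 y Hy).
    pose proof (Dq y Hy). pose proof (Dqt y Hy).
    apply (cd_unique (fun z => qt (tt_of z) * ((RtoC 2 * z + 1) * q (t_of z) + z ^ 2) ^ 2)
                     (fun z => q (t_of z) * (q (t_of z) + z * (z + RtoC 2)) ^ 2) y).
    - apply (filter_imp U); [|exact (HU y Hy)]. intros z Hz.
      destruct (H2 z Hz) as [HDz [Heq _]]. rewrite Heq. unfold qt_of. field. exact HDz.
    - eapply cd_eq. cd_auto2. cbv beta. unfold Df, D1f. ring.
    - eapply cd_eq. cd_auto2. cbv beta. unfold N1f. ring. }
  destruct (H1 s0 Hs0) as [H21 [Ht0 [Ht1 [Hq0 [Hq1 [Hqt [Hlq [Hddq Heqq]]]]]]]].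
  destruct (H2 s0 Hs0) as [HD [HA [Hlqt Hddqt]]].
  destruct (H3 s0 Hs0) as [Htt0 [Htt1 [HA0 [HA1 HAt]]]].
  destruct (s_facts s0 H21 Htt0 Htt1) as [Hs [Hs2 Hs1]].
  pose proof (Dq s0 Hs0). pose proof (Dqt s0 Hs0).
  assert (E2 :
    (ddqt (tt_of s0) * TT1f s0 * TT1f s0 + dqt (tt_of s0) * TT2f s0) * Df s0 (q (t_of s0)) ^ 2
    + RtoC 4 * (dqt (tt_of s0) * TT1f s0) * Df s0 (q (t_of s0)) * D1f s0 (q (t_of s0)) (dq (t_of s0) * T1f s0)
    + RtoC 2 * qt (tt_of s0) * (D1f s0 (q (t_of s0)) (dq (t_of s0) * T1f s0) ^ 2
        + Df s0 (q (t_of s0)) * D2f s0 (dq (t_of s0) * T1f s0)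
             (ddq (t_of s0) * T1f s0 * T1f s0 + dq (t_of s0) * T2f s0))
    = N2f s0 (q (t_of s0)) (dq (t_of s0) * T1f s0)
             (ddq (t_of s0) * T1f s0 * T1f s0 + dq (t_of s0) * T2f s0)).
  { apply (cd_unique
      (fun z => dqt (tt_of z) * TT1f z * ((RtoC 2 * z + 1) * q (t_of z) + z ^ 2) ^ 2
         + RtoC 2 * qt (tt_of z) * ((RtoC 2 * z + 1) * q (t_of z) + z ^ 2)
           * (RtoC 2 * q (t_of z) + (RtoC 2 * z + 1) * (dq (t_of z) * T1f z) + RtoC 2 * z))
      (fun z => (dq (t_of z) * T1f z) * (q (t_of z) + z * (z + RtoC 2)) ^ 2
         + RtoC 2 * q (t_of z) * (q (t_of z) + z * (z + RtoC 2))
           * (dq (t_of z) * T1f z + (RtoC 2 * z + RtoC 2))) s0).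
    - apply (filter_imp U); [|exact (HU s0 Hs0)]. intros z Hz.
      pose proof (E1 z Hz) as Ez. unfold Df, D1f, N1f in Ez. exact Ez.
    - eapply cd_eq. cd_auto2. cbv beta. unfold Df, D1f, D2f. ring.
    - eapply cd_eq. cd_auto2. cbv beta. unfold N2f. ring. }
  refine (conj Htt0 (conj Htt1 (conj HA0 (conj HA1 (conj HAt (conj Hlqt (conj Hddqt _))))))).
  apply (key1 s0 (q (t_of s0)) (dq (t_of s0)) (ddq (t_of s0))); auto.
  - apply neq_sub; auto.
  - apply neq_sub; auto.
  - apply neq_sub; auto.
  - rewrite HA. unfold qt_of, Nf, Df. field. exact HD.
  - apply neq_sub; auto.
  - apply neq_sub; auto.
  - apply neq_sub; auto.
Qed.
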